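(* Let $n \ge 1$ and let $a, b \ge 1$ be integers with $a + b \le 2n$. The number of Dyck paths of semilength $n+1$ whose first peak has height $a$ and whose last peak has height $b$ is \[ \binom{2n-a-b}{n-a} - \binom{2n-a-b}{n}. \]
   Context: A Dyck path of semilength $N$ is a lattice path from $(0,0)$ to $(2N,0)$ with steps $U=(1,1)$ and $D=(1,-1)$ never going below the $x$-axis. A peak is an up-step immediately followed by a down-step; its height is the $y$-coordinate at the end of its up-step. Binomial coefficients $\binom{p}{q}$ are $0$ when $q<0$ or $q>p$. *)

(* Defs.v *)
From mathcomp Require Import all_boot all_order all_algebra.
Set Implicit Arguments. Unset Strict Implicit. Unset Printing Implicit Defensive.
Import GRing.Theory Num.Theory.
Local Open Scope ring_scope.

(* A lattice path is a sequence of steps: true = U = (1,1), false = D = (1,-1). *)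

Definition hgt (s : seq bool) : int := \sum_(x <- s) (if x then 1 else -1).

(* Dyck path: never goes below the x-axis and ends on it
   (semilength fixed by the length of the tuple, 2N). *)
Definition is_dyck (s : seq bool) : bool :=
  all (fun k => 0 <= hgt (take k s)) (iota 0 (size s).+1) && (hgt s == 0).

Definition is_peak (s : seq bool) (i : nat) : bool :=
  nth false s i && ~~ nth true s i.+1.

Definition peaks (s : seq bool) : seq nat :=
  [seq i <- iota 0 (size s) | is_peak s i].

Definition peak_height (s : seq bool) (i : nat) : int := hgt (take i.+1 s).

Definition first_peak_height_is (s : seq bool) (a : int) : bool :=
  (peaks s != [::]) && (peak_height s (head 0%N (peaks s)) == a).

Definition last_peak_height_is (s : seq bool) (b : int) : bool :=
  (peaks s != [::]) && (peak_height s (last 0%N (peaks s)) == b).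

(* binomial coefficient with integer lower index: zero when q < 0
   (and 'C(p, q) = 0 when q > p already). *)
Definition binz (p : nat) (q : int) : nat :=
  match q with Posz k => 'C(p, k) | Negz _ => 0%N end.

(* Main.v *)
Require Import Defs.
From mathcomp Require Import all_boot all_order all_algebra zify.
Import GRing.Theory Num.Theory.
Local Open Scope ring_scope.

Fixpoint allseq (m : nat) : seq (seq bool) :=
  if m is m'.+1 then map (cons true) (allseq m') ++ map (cons false) (allseq m')
  else [:: [::]].

Lemma cons_inj (c : bool) : injective (cons c).
Proof. by move=> x y []. Qed.

Lemma mem_allseq m s : (s \in allseq m) = (size s == m).
Proof.
elim: m s => [|m IH] [|c s] //=.
- by apply/negbTE/negP; rewrite mem_cat => /orP[] /mapP[x _].
- rewrite mem_cat; case: c.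
  + rewrite (mem_map (@cons_inj true)) IH eqSS.
    by apply/orb_idr => /mapP[x _].
  + rewrite (mem_map (@cons_inj false)) IH eqSS.
    by apply/orb_idl => /mapP[x _].
Qed.

Lemma allseq_uniq m : uniq (allseq m).
Proof.
elim: m => [|m IH] //=.
rewrite cat_uniq !(map_inj_uniq (@cons_inj _)) IH /= andbT.
by apply/hasPn => x /mapP[y _ ->]; apply/mapP => -[z _].
Qed.

Definition stp (c : bool) : int := if c then 1 else -1.

Fixpoint nn (x : int) (s : seq bool) : bool :=
  if s is c :: s' then (0 <= x + stp c) && nn (x + stp c) s' else true.

Lemma hgt_nil : hgt [::] = 0.
Proof. by rewrite /hgt big_nil. Qed.

Lemma hgt_cons c s : hgt (c :: s) = stp c + hgt s.
Proof. by rewrite /hgt big_cons. Qed.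

Lemma hgt_cat s1 s2 : hgt (s1 ++ s2) = hgt s1 + hgt s2.
Proof. by rewrite /hgt big_cat. Qed.

Lemma hgt_count s : hgt s = (2 * count id s)%N%:Z - (size s)%:Z.
Proof.
elim: s => [|c s IH]; first by rewrite hgt_nil.
rewrite hgt_cons IH; case: c => /=; lia.
Qed.

Lemma nn_cat x s1 s2 : nn x (s1 ++ s2) = nn x s1 && nn (x + hgt s1) s2.
Proof.
elim: s1 x => [|c s1 IH] x /=; first by rewrite hgt_nil addr0.
by rewrite IH hgt_cons addrA andbA.
Qed.

Lemma all_take x s :
  all (fun k => 0 <= x + hgt (take k s)) (iota 0 (size s).+1) = (0 <= x) && nn x s.
Proof.
elim: s x => [|c s IH] x; first by rewrite /= hgt_nil addr0 andbT.
change (iota 0 (size (c :: s)).+1) with (0%N :: iota (1+0) (size s).+1).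
rewrite iotaDl -[0%N :: _]cat1s all_cat all_map.
have E : all (preim (addn 1) (fun k => 0 <= x + hgt (take k (c :: s)))) (iota 0 (size s).+1)
   = all (fun k => 0 <= (x + stp c) + hgt (take k s)) (iota 0 (size s).+1).
  by apply: eq_all => k /=; rewrite hgt_cons addrA.
rewrite {}E IH.
by rewrite /= hgt_nil addr0 andbT.
Qed.

Lemma is_dyckE s : is_dyck s = nn 0 s && (hgt s == 0).
Proof.
rewrite /is_dyck.
rewrite (eq_all (a2 := fun k => 0 <= 0 + hgt (take k s))); last by move=> k; rewrite add0r.
by rewrite all_take.
Qed.

Lemma nn_hgt x s : 0 <= x -> nn x s -> 0 <= x + hgt s.
Proof.
elim: s x => [|c s IH] x /=; first by rewrite hgt_nil addr0.
by move=> _ /andP[h1 h2]; rewrite hgt_cons addrA; apply: IH.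
Qed.

Definition F m (x u : nat) :=
  count (fun w => nn x%:Z w && (count id w == u)) (allseq m).

Lemma F_formula m x u : (m <= x + 2 * u + 1)%N ->
  (F m x u)%:Z = ('C(m, u))%:Z - ('C(m, u + x + 1))%:Z.
Proof.
elim: m x u => [|m IH] x u Hm.
  rewrite /F /=; case: u Hm => [|u] _ /=; rewrite ?bin0 ?addn1 ?bin0n //.
rewrite /F /= count_cat !count_map.
rewrite (eq_count (a2 := fun w => (u != 0%N) && (nn (x.+1)%:Z w && (count id w == u.-1)))); last first.
  move=> w /=; have -> : x%:Z + stp true = (x.+1)%:Z by rewrite /=; lia.
  case: u {Hm} => [|u] /=; first by rewrite andbF.
  by rewrite eqSS.
rewrite (eq_count (a1 := preim _ _) (a2 := fun w => (x != 0%N) && (nn (x.-1)%:Z w && (count id w == u)))); last first.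
  move=> w /=; case: x {Hm} => [|x] /=; first by [].
  rewrite (_ : x.+1%:Z - 1 = x%:Z) ?add0n //; lia.
have c0 : forall T (l : seq T), count (fun _ => false) l = 0%N by move=> T; elim.
case: u Hm => [|u] Hm; case: x Hm => [|x] Hm /=; rewrite ?c0 ?add0n ?addn0.
- have -> : m = 0%N by lia.
  by [].
- have := IH x 0%N; rewrite /F => -> ; last by lia.
  rewrite !add0n !addn1 binS (bin_small (n := m) (m := x.+2)) ?bin0; lia.
- have := IH 1%N u; rewrite /F => -> ; last by lia.
  rewrite !addn1 !binS; lia.
- rewrite PoszD.
  have := IH x.+2 u; rewrite /F => -> ; last by lia.
  have := IH x u.+1; rewrite /F => -> ; last by lia.
  rewrite !addn1 !addSn !addnS !binS; lia.
Qed.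

Lemma nth_front d k r i : (i < k)%N -> nth d (nseq k true ++ r) i = true.
Proof. by move=> H; rewrite nth_cat size_nseq H nth_nseq H. Qed.

Lemma nth_front2 d k r i : nth d (nseq k true ++ r) (k + i) = nth d r i.
Proof. by rewrite nth_cat size_nseq ltnNge leq_addr /= addKn. Qed.

Lemma peaks_front k r : (0 < k)%N ->
  exists tl, peaks (nseq k true ++ false :: r) = k.-1 :: tl.
Proof.
move=> Hk; set s := nseq k true ++ false :: r.
rewrite /peaks (_ : size s = k.-1 + (size r).+2)%N; last first.
  by rewrite /s size_cat size_nseq /=; lia.
rewrite iotaD filter_cat.
have -> : [seq i <- iota 0 k.-1 | is_peak s i] = [::].
  rewrite -(filter_pred0 (iota 0 k.-1)); apply: eq_in_filter => i.
  rewrite mem_iota => /andP[_ Hi]; rewrite /is_peak /s nth_front /=; last by lia.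
  by rewrite nth_front //; lia.
rewrite add0n /= (_ : is_peak s k.-1 = true); first by eexists.
rewrite /is_peak /s nth_front; last by lia.
rewrite (prednK Hk) -[X in nth _ _ X](addn0 k) nth_front2 //.
Qed.

Lemma peaks_back l b : (0 < b)%N ->
  exists hd, peaks (l ++ true :: nseq b false) = rcons hd (size l).
Proof.
move=> Hb; set s := l ++ true :: nseq b false.
rewrite /peaks (_ : size s = size l + b.+1)%N; last first.
  by rewrite /s size_cat /= size_nseq.
rewrite iotaD filter_cat add0n /=.
have -> : [seq i <- iota (size l).+1 b | is_peak s i] = [::].
  rewrite -(filter_pred0 (iota (size l).+1 b)); apply: eq_in_filter => i.
  rewrite mem_iota => /andP[H1 H2]; rewrite /is_peak /s nth_cat ltnNge.
  rewrite (ltnW H1) /= (_ : (i - size l = (i - size l).-1.+1)%N); last by lia.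
  by rewrite /= nth_nseq; case: ifP.
rewrite (_ : is_peak s (size l) = true); first by exists [seq i <- iota 0 (size l) | is_peak s i]; rewrite cats1.
rewrite /is_peak /s nth_cat ltnn subnn /= nth_cat ltnNge leqnSn /= subSn // subnn /=.
by rewrite nth_nseq Hb.
Qed.

Lemma front_split (s : seq bool) :
  exists k r, s = nseq k true ++ r /\ (r = [::] \/ exists r', r = false :: r').
Proof.
elim: s => [|c s [k [r [-> H]]]]; first by exists 0%N, [::]; split; [|left].
case: c; first by exists k.+1, r.
by exists 0%N, (false :: (nseq k true ++ r)); split; [|right; eexists].
Qed.

Lemma back_split (s : seq bool) :
  exists l j, s = l ++ nseq j false /\ (l = [::] \/ exists l', l = rcons l' true).
Proof.
elim/last_ind: s => [|s c [l [j [-> H]]]]; first by exists [::], 0%N; split; [|left].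
case: c; last first.
  exists l, j.+1; split => //; rewrite -cats1 -catA cats1.
  by rewrite (_ : rcons (nseq j false) false = nseq j.+1 false) //; elim: j {H} => //= j ->.
by exists (rcons (l ++ nseq j false) true), 0%N; split; [rewrite cats0|right; eexists].
Qed.

Lemma nn_true x k : 0 <= x -> nn x (nseq k true).
Proof.
elim: k x => [|k IH] x Hx //=.
have H : 0 <= x + stp true by rewrite /=; lia.
by rewrite H IH.
Qed.

Lemma nn_false x k : 0 <= x -> nn x (nseq k false) = (k%:Z <= x).
Proof.
elim: k x => [|k IH] x Hx /=.
  apply/esym; lia.
have [H|H] := boolP (0 <= x + stp false).
  rewrite /= in H; rewrite /= IH //; apply/idP/idP => ?; lia.
rewrite /= in H; apply/esym/negbTE; lia.
Qed.

Lemma hgt_nseqT k : hgt (nseq k true) = k%:Z.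
Proof. elim: k => [|k IH]; first by rewrite hgt_nil. by rewrite /= hgt_cons IH /=; lia. Qed.

Lemma hgt_nseqF k : hgt (nseq k false) = - k%:Z.
Proof. elim: k => [|k IH]; first by rewrite hgt_nil. by rewrite /= hgt_cons IH /=; lia. Qed.

Lemma nth_back d (l r : seq bool) i : nth d (l ++ r) (size l + i) = nth d r i.
Proof. by rewrite nth_cat ltnNge leq_addr /= addKn. Qed.

Lemma take_sizeS (l r : seq bool) c : take (size l).+1 (l ++ c :: r) = l ++ [:: c].
Proof. by elim: l => [|x l IH] /=; rewrite ?take0 ?IH. Qed.

Definition embed (a b : nat) (w : seq bool) :=
  nseq a true ++ false :: (w ++ true :: nseq b false).

Definition Pd (a b : nat) (s : seq bool) :=
  is_dyck s && first_peak_height_is s a%:Z && last_peak_height_is s b%:Z.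

Lemma embedE a b w : embed a b w = (nseq a true ++ [:: false]) ++ (w ++ true :: nseq b false).
Proof. by rewrite /embed -catA. Qed.

Lemma embedE2 a b w : embed a b w = (nseq a true ++ false :: w) ++ true :: nseq b false.
Proof. by rewrite /embed -catA. Qed.

Lemma P_embed n a b w : (1 <= a)%N -> (1 <= b)%N -> (a + b <= 2 * n)%N ->
  size w = (2 * n - a - b)%N -> nn (a.-1)%:Z w -> (count id w + a)%N = n ->
  Pd a b (embed a b w).
Proof.
move=> Ha Hb Hab Hw Hnn Hc.
have Hhw : hgt w = b%:Z - a%:Z by rewrite hgt_count Hw; lia.
rewrite /Pd; apply/andP; split; first (apply/andP; split).
- rewrite is_dyckE; apply/andP; split.
    rewrite embedE nn_cat nn_cat nn_true ?hgt_nseqT //=.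
    rewrite nn_cat hgt_cat hgt_nseqT hgt_cons hgt_nil.
    have -> : 0 + (a%:Z + (stp false + 0)) = (a.-1)%:Z by rewrite /=; lia.
    rewrite Hnn /= Hhw andbT.
    apply/andP; split; first lia.
    have -> : a.-1%:Z + (b%:Z - a%:Z) + 1 = b%:Z by lia.
    rewrite nn_false //; apply/andP; split => //; lia.
  rewrite embedE2 !hgt_cat hgt_cons /= hgt_cons hgt_nseqT hgt_nseqF Hhw /=.
  apply/eqP; lia.
- rewrite /first_peak_height_is /embed.
  have [tl ->] := peaks_front a (w ++ true :: nseq b false) Ha.
  rewrite /= /peak_height (prednK Ha) take_size_cat ?size_nseq // hgt_nseqT.
  by [].
- rewrite /last_peak_height_is embedE2.
  have [hd ->] := peaks_back (nseq a true ++ false :: w) b Hb.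
  rewrite -size_eq0 size_rcons /= last_rcons /peak_height.
  rewrite take_sizeS.
  rewrite !hgt_cat !hgt_cons hgt_nseqT Hhw hgt_nil /=.
  apply/eqP; lia.
Qed.

Lemma P_inv n a b s : (1 <= a)%N -> (1 <= b)%N -> (a + b <= 2 * n)%N ->
  size s = (2 * n.+1)%N -> Pd a b s ->
  exists w, [/\ size w = (2 * n - a - b)%N, nn (a.-1)%:Z w,
             (count id w + a)%N = n & s = embed a b w].
Proof.
move=> Ha Hb Hab Hs /andP[/andP[Hd Hf] Hl].
move: Hd; rewrite is_dyckE => /andP[Hnn /eqP H0].
have [k [r [Hs1 Hr]]] := front_split s.
case: Hr => [Er|[r' Er]]; subst r.
  by move: H0 Hs; rewrite Hs1 cats0 hgt_nseqT size_nseq; lia.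
have Hk : (0 < k)%N.
  by case: k Hs1 => // Hs1; move: Hnn; rewrite Hs1.
have Eka : k = a.
  move: Hf; rewrite /first_peak_height_is Hs1.
  have [tl ->] := peaks_front k r' Hk.
  rewrite /= /peak_height (prednK Hk) take_size_cat ?size_nseq // hgt_nseqT.
  by move/eqP => [].
subst k.
have [l [j [Hs2 Hl2]]] := back_split s.
case: Hl2 => [El|[l' El]]; subst l.
  by case: j Hs2 => [|j] Hs2; [move: Hs; rewrite Hs2 | move: Hnn; rewrite Hs2].
have Hs3 : s = l' ++ true :: nseq j false by rewrite Hs2 -cats1 -catA.
have Hj : (0 < j)%N.
  case: j Hs3 {Hs2} => // Hs3.
  move: Hnn H0; rewrite Hs3 nn_cat hgt_cat hgt_cons hgt_nil => /andP[Hl' _].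
  have := @nn_hgt 0 l' (Order.POrderTheory.lexx _) Hl'; rewrite /=; lia.
have Ejb : j = b.
  move: Hl; rewrite /last_peak_height_is Hs3.
  have [hd ->] := peaks_back l' j Hj.
  rewrite /= last_rcons /peak_height take_sizeS.
  rewrite hgt_cat hgt_cons hgt_nil => /andP[_ /eqP Hb'].
  rewrite /= in Hb'; move: H0; rewrite Hs3 hgt_cat hgt_cons hgt_nseqF /=; lia.
subst j.
set t := size l'.
have Nt : nth false s t = true by rewrite Hs3 -[t]addn0 nth_back.
case: (ltngtP t a) => Hta.
- case: (ltngtP t.+1 a) => Hta2.
  + have := @nth_front false a (false :: r') _ Hta2; rewrite -Hs1.
    by rewrite Hs3 -addn1 nth_back /= nth_nseq Hb.
  + by lia.
  + move: Hs; rewrite Hs3 size_cat /= size_nseq -/t; lia.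
- have Htk : take a.+1 l' = nseq a true ++ [:: false].
    have := congr1 (take a.+1) Hs3; rewrite takel_cat //.
    rewrite Hs1 -cat_rcons take_size_cat; last by rewrite size_rcons size_nseq.
    by rewrite -cats1 => ->.
  exists (drop a.+1 l').
  have Es : s = embed a b (drop a.+1 l').
    by rewrite {1}Hs3 -{1}(cat_take_drop a.+1 l') Htk embedE !catA.
  have Hw : size (drop a.+1 l') = (2 * n - a - b)%N.
    by move: Hs; rewrite Es /embed size_cat /= size_cat /= size_nseq size_nseq; lia.
  split => //.
  + move: Hnn; rewrite Es embedE nn_cat hgt_cat hgt_nseqT hgt_cons hgt_nil /= => /andP[_].
    rewrite nn_cat => /andP[+ _].
    by rewrite (_ : 0 + (a%:Z + (-1 + 0)) = (a.-1)%:Z) //; lia.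
  + move: H0; rewrite Es embedE2 !hgt_cat hgt_cons hgt_cons hgt_nseqT hgt_nseqF.
    rewrite hgt_count Hw /=; lia.
- by move: Nt; rewrite Hs1 Hta nth_cat size_nseq ltnn subnn.
Qed.

Lemma count_bij (P Q : pred (seq bool)) (f : seq bool -> seq bool) M m :
  {in [pred w | size w == m] &, injective f} ->
  (forall w, size w = m -> Q w -> size (f w) = M /\ P (f w)) ->
  (forall s, size s = M -> P s -> exists2 w, size w = m /\ Q w & s = f w) ->
  count P (allseq M) = count Q (allseq m).
Proof.
move=> finj Hf Hb.
rewrite -!size_filter -(size_map f (filter Q _)).
apply: perm_size; apply: uniq_perm.
- by rewrite filter_uniq // allseq_uniq.
- rewrite map_inj_in_uniq ?filter_uniq ?allseq_uniq //.
  move=> x y; rewrite !mem_filter !mem_allseq => /andP[_ Hx] /andP[_ Hy].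
  exact: finj.
move=> s; rewrite mem_filter mem_allseq; apply/idP/idP.
  move=> /andP[Ps /eqP Hs]; have [w [Hw Qw] ->] := Hb s Hs Ps.
  by apply: map_f; rewrite mem_filter mem_allseq Qw Hw eqxx.
move=> /mapP[w]; rewrite mem_filter mem_allseq => /andP[Qw /eqP Hw] ->.
by have [-> ->] := Hf w Hw Qw; rewrite eqxx.
Qed.

Lemma card_allseq M (P : pred (seq bool)) :
  #|[pred t : M.-tuple bool | P t]| = count P (allseq M).
Proof.
rewrite cardE /enum_mem size_filter.
rewrite (eq_count (a2 := preim val P)) // -count_map -enumT.
suff /permP H : perm_eq (map val (enum {: M.-tuple bool})) (allseq M) by apply: H.
apply: uniq_perm.
- by rewrite map_inj_uniq ?enum_uniq //; apply: val_inj.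
- exact: allseq_uniq.
move=> s; rewrite mem_allseq; apply/mapP/idP.
  by move=> [t _ ->]; rewrite size_tuple.
by move=> H; exists (Tuple H); rewrite ?mem_enum.
Qed.

Theorem mainTheorem6 (n a b : nat) :
  (1 <= n)%N -> (1 <= a)%N -> (1 <= b)%N -> (a + b <= 2 * n)%N ->
  (#|[pred t : (2 * n.+1).-tuple bool |
        is_dyck t && first_peak_height_is t a%:Z && last_peak_height_is t b%:Z]|%:Z
   = (binz (2 * n - a - b) (n%:Z - a%:Z))%:Z - (binz (2 * n - a - b) n%:Z)%:Z)%R.
Proof.
move=> Hn Ha Hb Hab.
rewrite (card_allseq (2 * n.+1) (Pd a b)).
rewrite (@count_bij (Pd a b) (fun w => nn (a.-1)%:Z w && (count id w + a == n)%N)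
                   (embed a b) (2 * n.+1) (2 * n - a - b)%N).
- case: (leqP a n) => Han.
  + rewrite (eq_count (a2 := fun w => nn (a.-1)%:Z w && (count id w == n - a)%N)); last first.
      by move=> w /=; congr andb; apply/idP/idP => /eqP ?; apply/eqP; lia.
    rewrite -/(F _ _ _) F_formula; last by lia.
    rewrite (subzn Han) /= (_ : (n - a + a.-1 + 1 = n)%N) //; lia.
  + rewrite (eq_count (a2 := pred0)); last by move=> w /=; rewrite andbC (_ : (count id w + a == n)%N = false) //; apply/negbTE; lia.
    rewrite count_pred0 /= bin_small; last by lia.
    by case E: (n%:Z - a%:Z) => [k|k] //; lia.
- move=> x y; rewrite !inE => /eqP Hx /eqP Hy; rewrite !embedE => E.
  have := congr1 (take (2 * n - a - b)) (congr1 (drop a.+1) E).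
  rewrite !drop_size_cat ?size_cat ?size_nseq ?addn1 //.
  by rewrite !take_size_cat.
- move=> w Hw /andP[Hnn /eqP Hc]; split; last exact: (@P_embed n a b w Ha Hb Hab Hw Hnn Hc).
  by rewrite /embed size_cat /= size_cat /= size_nseq size_nseq Hw; lia.
- move=> s Hs Ps; have [w [H1 H2 H3 H4]] := @P_inv n a b s Ha Hb Hab Hs Ps.
  by exists w => //; split => //; rewrite H2 H3 eqxx.
Qed.
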